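(* Let $S^P$ denote the complexity function of the family of maximal configurations resistant to predators (in the one-dimensional Riviera model). Then for every $\rho$ with $\frac{1}{2} < \rho < \frac{2}{3}$, $$S^P(\rho) = (1 - \rho) \ln(1 - \rho) - (2\rho - 1) \ln(2\rho - 1) - (2 - 3\rho) \ln(2 - 3\rho).$$
   Context: A configuration of length $n\ge 0$ is a binary string $c_1c_2\cdots c_n$; $c_k=1$ means lot $k$ is occupied by a house, $c_k=0$ that it is empty. A house at position $k$ is blocked (from sunlight) if $2\le k\le n-1$ and $c_{k-1}=c_{k+1}=1$; lots beyond the ends of the string never obstruct sunlight. A configuration is permissible if no house is blocked. It is maximal (jammed) if it is permissible and, for every $k$ with $c_k=0$, the string obtained by setting $c_k=1$ is not permissible. A maximal configuration is resistant to predators if, for every $k$ with $c_k=0$, in the string obtained by setting $c_k=1$ the new house at position $k$ is blocked. Let $J_{k,n}$ be the number of such configurations of length $n$ with exactly $k$ occupied lots; whenever $J_{k,n}=0$ it is redefined to be $1$. The complexity function is $S(\rho)=\sup \limsup_{i\to\infty} \frac{\ln J_{k_i,n_i}}{n_i}$, where the supremum ranges over all sequences $((k_i,n_i))_i$ of pairs of non-negative integers with $n_i\to\infty$ and $k_i/n_i\to\rho$. *)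

(* Defs.v *)
From HB Require Import structures.
From mathcomp Require Import all_boot all_order all_algebra.
From mathcomp Require Import all_classical all_reals all_analysis.
Set Implicit Arguments. Unset Strict Implicit. Unset Printing Implicit Defensive.
Import Order.TTheory GRing.Theory Num.Theory numFieldNormedType.Exports.
Local Open Scope classical_set_scope.
Local Open Scope ring_scope.

(* A configuration is a seq bool c; lot k (0-indexed, k < size c) is occupied
   iff nth false c k.  Positions beyond the ends never obstruct sunlight. *)

(* position k (0-indexed) is surrounded by houses on both sides
   (i.e. 2 <= k+1 <= n-1 in 1-indexed terms) *)
Definition surrounded (c : seq bool) (k : nat) : bool :=
  [&& (0 < k)%N, (k.+1 < size c)%N, nth false c k.-1 & nth false c k.+1].

Definition blocked_house (c : seq bool) (k : nat) : bool :=
  nth false c k && surrounded c k.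

Definition permissible (c : seq bool) : bool :=
  [forall k : 'I_(size c), ~~ blocked_house c k].

Definition maximal (c : seq bool) : bool :=
  permissible c &&
  [forall k : 'I_(size c), ~~ nth false c k ==> ~~ permissible (set_nth false c k true)].

Definition resistant (c : seq bool) : bool :=
  maximal c &&
  [forall k : 'I_(size c), ~~ nth false c k ==>
      blocked_house (set_nth false c k true) k].

(* J_{k,n}, with 0 redefined to 1 *)
Definition J (k n : nat) : nat :=
  let m := #|[set c : n.-tuple bool | resistant c && (count id c == k)%N]| in
  if m == 0%N then 1 else m.

Definition admissible {R : realType} (rho : R) (kn : nat -> nat * nat) : Prop :=
  ((fun i => ((kn i).2)%:R : R) @ \oo --> +oo) /\
  ((fun i => ((kn i).1)%:R / ((kn i).2)%:R : R) @ \oo --> rho).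

Definition SP {R : realType} (rho : R) : \bar R :=
  ereal_sup [set limn_esup (fun i => (ln ((J (kn i).1 (kn i).2)%:R : R)
                                        / ((kn i).2)%:R)%:E)
            | kn in [set kn | admissible rho kn]].

(* Main.v *)
Require Import Defs.
From mathcomp Require Import all_boot all_order all_algebra.
From mathcomp Require Import all_classical all_reals all_analysis.
From mathcomp Require Import zify ring lra.
Import Order.TTheory GRing.Theory Num.Theory numFieldNormedType.Exports.
Set Implicit Arguments. Unset Strict Implicit. Unset Printing Implicit Defensive.

Fixpoint tri (a b : bool) (s : seq bool) : bool :=
  match s with
  | [::] => b == ~~ (a && false)
  | x :: s' => (b == ~~ (a && x)) && tri b x s'
  end.

Definition good (c : seq bool) : bool :=
  if c is b :: s then tri false b s else true.

Lemma triP a b s : tri a b s =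
  all (fun k => nth false (b :: s) k ==
         ~~ (nth false (a :: b :: s) k && nth false (b :: s) k.+1))
      (iota 0 (size s).+1).
Proof.
elim: s a b => [|x s IH] a b /=; first by rewrite andbT.
rewrite IH /= (iotaDl 1 1) all_map; congr (_ && _).
Qed.

Lemma surrE c k : surrounded c k = nth false (false :: c) k && nth false c k.+1.
Proof.
rewrite /surrounded; case: k => [|k] //=.
case: (ltnP k.+2 (size c)) => h; first by [].
by rewrite (nth_default _ h) !andbF.
Qed.

Lemma surr_set c k b : (k < size c)%N ->
  surrounded (set_nth false c k b) k = surrounded c k.
Proof.
move=> kc; rewrite !surrE; case: k kc => [|k] kc /=; first by [].
rewrite !nth_set_nth /=.
have -> : (k == k.+1) = false by rewrite eqn_leq ltnn andbF.
have -> : (k.+2 == k.+1) = false by rewrite eqn_leq ltnn.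
by [].
Qed.

Definition loc (c : seq bool) : bool :=
  all (fun k => nth false c k == ~~ surrounded c k) (iota 0 (size c)).

Lemma resistant_loc c : resistant c = loc c.
Proof.
apply/idP/idP.
- case/andP=> /andP[/forallP perm _] /forallP r3.
  apply/allP => k; rewrite mem_iota add0n => /= kc.
  have := perm (Ordinal kc); have := r3 (Ordinal kc); rewrite /blocked_house /=.
  case: (nth false c k) => /=.
    by move=> _ /negbTE ->.
  by rewrite nth_set_nth /= eqxx /= surr_set // => ->.
- move/allP=> H.
  have H' k : (k < size c)%N -> nth false c k = ~~ surrounded c k.
    by move=> kc; apply/eqP/H; rewrite mem_iota add0n.
  have permc : permissible c.
    apply/forallP => k; rewrite /blocked_house (H' _ (ltn_ord k)).
    by case: (surrounded c k).
  rewrite /resistant /maximal permc /=; apply/andP; split.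
  + apply/forallP => k; apply/implyP => nk.
    have e : size (set_nth false c k true) = size c.
      by rewrite size_set_nth; apply/maxn_idPr.
    apply/negP => /forallP /(_ (cast_ord (esym e) k)).
    rewrite /= /blocked_house nth_set_nth /= eqxx /= surr_set //.
    by rewrite (H' _ (ltn_ord k)) in nk; rewrite negbK in nk; rewrite nk.
  + apply/forallP => k; apply/implyP => nk.
    rewrite /blocked_house nth_set_nth /= eqxx /= surr_set //.
    by rewrite (H' _ (ltn_ord k)) in nk; rewrite negbK in nk.
Qed.

Lemma resistant_good c : resistant c = good c.
Proof.
rewrite resistant_loc /loc; case: c => [|b s] //=.
rewrite triP /=; congr (_ && _); apply: eq_in_all => k.
by rewrite mem_iota surrE; case: k.
Qed.

Definition block (x : bool) : seq bool := if x then [:: true; true] else [:: true].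

Fixpoint enc (b : seq bool) : seq bool :=
  match b with
  | [::] => [::]
  | x :: b' => if b' is _ :: _ then block x ++ false :: enc b' else block x
  end.

Fixpoint dec (c : seq bool) : seq bool :=
  match c with
  | true :: true :: false :: s => true :: dec s
  | true :: false :: s => false :: dec s
  | [:: true; true] => [:: true]
  | [:: true] => [:: false]
  | _ => [::]
  end.

Lemma dec_enc b : dec (enc b) = b.
Proof.
elim: b => [|x b IH] //=; case: b IH => [|y b] IH; first by case: x.
by case: x => /=; rewrite IH.
Qed.

Lemma good_tf s : good [:: true, false & s] = (s != [::]) && good s.
Proof. by case: s => [|[] [|z s]]. Qed.

Lemma good_ttf s : good [:: true, true, false & s] = (s != [::]) && good s.
Proof. by case: s => [|[] [|z s]]. Qed.

Lemma enc_nil b : (enc b == [::]) = (b == [::]).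
Proof. by case: b => [|x [|y b]] //=; case: x. Qed.

Lemma good_enc b : good (enc b).
Proof.
elim: b => [|x b IH] //=; case: b IH => [|y b] IH; first by case: x.
have ne : enc (y :: b) != [::] by rewrite enc_nil.
case: x.
  by rewrite (_ : block true ++ _ = [:: true, true, false & enc (y::b)]) // good_ttf ne IH.
by rewrite (_ : block false ++ _ = [:: true, false & enc (y::b)]) // good_tf ne IH.
Qed.

Lemma size_enc b : size (enc b) = (2 * size b + count id b).-1.
Proof.
elim: b => [|x b IH] //; rewrite [enc _]/=; case: b IH => [|y b] IH; first by case: x.
rewrite size_cat /= in IH *; rewrite IH.
by case: x => /=; lia.
Qed.

Lemma count_enc b : count id (enc b) = (size b + count id b)%N.
Proof.
elim: b => [|x b IH] //; rewrite [enc _]/=; case: b IH => [|y b] IH; first by case: x.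
rewrite count_cat /= in IH *; rewrite IH.
by case: x => /=; lia.
Qed.

Lemma enc_dec_n n c : (size c <= n)%N -> good c -> c != [::] -> enc (dec c) = c.
Proof.
elim: n c => [|n IH] c; first by case: c.
case: c => [|[] c] //; last by case: c => [|z c].
case: c => [|[] c] //.
  case: c => [|[] c] //; try by move=> _ /=.
  move=> sz; rewrite good_ttf => /andP[ns gs] _.
  have e := IH c (ltnW (ltnW sz)) gs ns.
  have ne : dec c != [::] by apply: contra ns => /eqP dn; rewrite -e dn.
  by rewrite [dec _]/=; case: (dec c) e ne => // y d <-.
move=> sz; rewrite good_tf => /andP[ns gs] _.
have e := IH c (ltnW sz) gs ns.
have ne : dec c != [::] by apply: contra ns => /eqP dn; rewrite -e dn.
by rewrite [dec _]/=; case: (dec c) e ne => // y d <-.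
Qed.

Definition gs m (S : {set 'I_m}) : seq bool := [seq i \in S | i <- enum 'I_m].

Lemma size_gs m (S : {set 'I_m}) : size (gs S) = m.
Proof. by rewrite size_map size_enum_ord. Qed.

Lemma count_gs m (S : {set 'I_m}) : count id (gs S) = #|S|.
Proof. by rewrite count_map enumT cardE /enum_mem size_filter. Qed.

Lemma gs_inj m (S1 S2 : {set 'I_m}) : gs S1 = gs S2 -> S1 = S2.
Proof.
move=> e; apply/setP => i; have := congr1 (nth false ^~ (nat_of_ord i)) e.
by rewrite /gs !(nth_map i) -?enumT ?size_enum_ord // nth_ord_enum.
Qed.

Lemma gs_surj m (b : seq bool) : size b = m -> gs [set i : 'I_m | nth false b i] = b.
Proof.
move=> sb; apply: (@eq_from_nth _ false); first by rewrite size_gs.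
move=> i; rewrite size_gs => ilt.
by rewrite /gs (nth_map (Ordinal ilt)) ?size_enum_ord // inE nth_enum_ord.
Qed.

Lemma val_mk n (s : seq bool) : size s = n ->
  val [tuple nth false s i | i < n] = s.
Proof.
move=> sz; apply: (@eq_from_nth _ false); first by rewrite size_tuple.
move=> i; rewrite size_tuple => ilt.
by rewrite -[i]/(nat_of_ord (Ordinal ilt)) nth_mktuple.
Qed.

Lemma card_res n k : (n.+1 <= 2 * k)%N -> (3 * k <= 2 * n + 2)%N ->
  #|[set c : n.-tuple bool | resistant c && (count id c == k)]| =
  'C(n - k + 1, 2 * k - n.+1).
Proof.
move=> h1 h2.
set m := (n - k + 1)%N; set j := (2 * k - n.+1)%N.
pose A := [set S : {set 'I_m} | #|S| == j].
pose f := fun S : {set 'I_m} => [tuple nth false (enc (gs S)) i | i < n].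
have szA S : S \in A -> size (enc (gs S)) = n.
  rewrite inE => /eqP cS; rewrite size_enc size_gs count_gs cS /m /j; lia.
have valf S : S \in A -> val (f S) = enc (gs S) by move=> SA; rewrite val_mk // szA.
have -> : [set c : n.-tuple bool | resistant c && (count id c == k)] = f @: A.
  apply/setP => c; rewrite inE; apply/idP/idP.
  - case/andP; rewrite resistant_good => gc /eqP cc.
    have nc : val c != [::] by rewrite -size_eq0 size_tuple; apply/eqP; lia.
    have ec := enc_dec_n (leqnn _) gc nc.
    have sc := size_enc (dec c); rewrite ec size_tuple in sc.
    have ct := count_enc (dec c); rewrite ec cc in ct.
    have sd : size (dec c) = m by rewrite /m; lia.
    apply/imsetP; exists [set i : 'I_m | nth false (dec c) i].
      by rewrite inE -count_gs gs_surj // /j; apply/eqP; lia.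
    apply: val_inj; rewrite val_mk ?gs_surj ?ec ?size_tuple //.
  - case/imsetP => S SA ->; rewrite resistant_good valf // good_enc /=.
    move: SA; rewrite inE => /eqP cS.
    by rewrite count_enc size_gs count_gs cS /m /j; apply/eqP; lia.
rewrite card_in_imset.
  by rewrite /A card_draws card_ord.
move=> S1 S2 S1A S2A e; apply: gs_inj.
by rewrite -(dec_enc (gs S1)) -valf // e valf // dec_enc.
Qed.

Section BinB.
Variables m j : nat.
Hypothesis jm : (j < m)%N.

Definition ttm i := ('C(m, i) * ((m - j) ^ (m - i) * j ^ i))%N.

Lemma sum_ttm : (m ^ m = \sum_(i < m.+1) ttm i)%N.
Proof. by rewrite -expnDn subnK // ltnW. Qed.

Lemma tt_rec i : (i < m)%N -> (i.+1 * (m - j) * ttm i.+1 = (m - i) * j * ttm i)%N.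
Proof.
move=> im; rewrite /ttm.
have e1 : (i.+1 * 'C(m, i.+1) = (m - i) * 'C(m, i))%N by rewrite mul_bin_left.
have e2 : ((m - j) * (m - j) ^ (m - i.+1) = (m - j) ^ (m - i))%N.
  by rewrite -expnS subnSK.
rewrite expnS.
transitivity ((i.+1 * 'C(m, i.+1)) * ((m - j) * (m - j) ^ (m - i.+1)) * j * j ^ i)%N.
  by ring.
rewrite e1 e2; ring.
Qed.

Lemma tt_up i : (i < j)%N -> (ttm i <= ttm i.+1)%N.
Proof.
move=> ij; have h := tt_rec (ltn_trans ij jm).
have pos : (0 < i.+1 * (m - j))%N by rewrite muln_gt0 /= subn_gt0.
rewrite -(leq_pmul2l pos) h.
have : (i.+1 * (m - j) <= (m - i) * j)%N by nia.
by move=> le; rewrite leq_mul2r le orbT.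
Qed.

Lemma tt_down i : (j <= i)%N -> (i < m)%N -> (ttm i.+1 <= ttm i)%N.
Proof.
move=> ji im; have h := tt_rec im.
have pos : (0 < i.+1 * (m - j))%N by rewrite muln_gt0 /= subn_gt0.
rewrite -(leq_pmul2l pos) h.
have : ((m - i) * j <= i.+1 * (m - j))%N by nia.
by move=> le; rewrite leq_mul2r le orbT.
Qed.

Lemma tt_max i : (i <= m)%N -> (ttm i <= ttm j)%N.
Proof.
move=> im; case: (leqP i j) => ij.
  have H d : (d <= j)%N -> (ttm (j - d) <= ttm j)%N.
    elim: d => [|d IH] dj; first by rewrite subn0.
    apply: leq_trans (IH (ltnW dj)).
    have -> : (j - d = (j - d.+1).+1)%N by lia.
    by apply: tt_up; lia.
  by have := H (j - i)%N (leq_subr _ _); rewrite subKn.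
have H d : (j + d <= m)%N -> (ttm (j + d) <= ttm j)%N.
  elim: d => [|d IH] dj; first by rewrite addn0.
  have dj' : (j + d <= m)%N by lia.
  apply: leq_trans (IH dj').
  by rewrite addnS; apply: tt_down; lia.
by have := H (i - j)%N; rewrite subnKC ?(ltnW ij) //; apply.
Qed.

Lemma bin_upper : ('C(m, j) * (j ^ j * (m - j) ^ (m - j)) <= m ^ m)%N.
Proof.
have jm1 : (j < m.+1)%N by apply: ltnW.
rewrite sum_ttm (bigD1 (Ordinal jm1)) //=.
apply: leq_trans (leq_addr _ _).
by rewrite /ttm /= [(j ^ j * _)%N]mulnC.
Qed.

Lemma bin_lower : (m ^ m <= m.+1 * ('C(m, j) * (j ^ j * (m - j) ^ (m - j))))%N.
Proof.
rewrite sum_ttm.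
have -> : ('C(m, j) * (j ^ j * (m - j) ^ (m - j)) = ttm j)%N by rewrite /ttm [(j ^ j * _)%N]mulnC.
apply: (@leq_trans (\sum_(i < m.+1) ttm j)%N).
  by apply: leq_sum => i _; apply: tt_max; rewrite -ltnS.
by rewrite sum_nat_const card_ord.
Qed.

End BinB.

Local Open Scope ring_scope.

Definition Hf (R : realType) (m j : nat) : R :=
  m%:R * ln (m%:R) - j%:R * ln (j%:R) - (m - j)%:R * ln ((m - j)%:R).

Lemma lnC_both (R : realType) (m j : nat) : (0 < j < m)%N ->
  ln ('C(m, j)%:R : R) <= Hf R m j /\ Hf R m j - ln (m.+1%:R : R) <= ln ('C(m, j)%:R : R).
Proof.
case/andP=> j0 jm.
have h1 := bin_upper jm; have h2 := bin_lower jm.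
have Cp : (0 < 'C(m, j))%N by rewrite bin_gt0 ltnW.
have mj0 : (0 < m - j)%N by rewrite subn_gt0.
have m0 : (0 < m)%N by apply: ltn_trans jm.
have pC : (0 : R) < 'C(m, j)%:R by rewrite ltr0n.
have pj : (0 : R) < j%:R by rewrite ltr0n.
have pm : (0 : R) < m%:R by rewrite ltr0n.
have pm1 : (0 : R) < m.+1%:R by rewrite ltr0n.
have pd : (0 : R) < (m - j)%:R by rewrite ltr0n.
have pjj : (0 : R) < j%:R ^+ j by rewrite exprn_gt0.
have pdd : (0 : R) < (m - j)%:R ^+ (m - j) by rewrite exprn_gt0.
have pmm : (0 : R) < m%:R ^+ m by rewrite exprn_gt0.
have eL : ln ((('C(m, j) * (j ^ j * (m - j) ^ (m - j)))%:R) : R) =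
   ln ('C(m, j)%:R) + (j%:R * ln j%:R + (m - j)%:R * ln (m - j)%:R).
  rewrite !natrM !natrX lnM; [|by rewrite posrE|by rewrite posrE mulr_gt0].
  rewrite lnM; [|by rewrite posrE|by rewrite posrE].
  have a1 : ln (j%:R ^+ j) = j%:R * ln (j%:R) :> R by rewrite (lnXn _ pj) mulr_natl.
  have a2 : ln ((m - j)%:R ^+ (m - j)) = (m - j)%:R * ln ((m - j)%:R) :> R.
    by rewrite (lnXn _ pd) mulr_natl.
  lra.
have eM : ln (((m ^ m)%:R) : R) = m%:R * ln m%:R.
  by rewrite natrX (lnXn _ pm) mulr_natl.
have eM1 : ln (((m.+1 * ('C(m, j) * (j ^ j * (m - j) ^ (m - j))))%:R) : R) =
   ln (m.+1%:R) + ln ((('C(m, j) * (j ^ j * (m - j) ^ (m - j)))%:R) : R).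
  rewrite natrM lnM; [by []|by rewrite posrE|].
  by rewrite posrE ltr0n !muln_gt0 Cp !expn_gt0 j0 mj0.
have q1 : ln ((('C(m, j) * (j ^ j * (m - j) ^ (m - j)))%:R) : R) <= ln (((m ^ m)%:R) : R).
  rewrite ler_ln; [by rewrite ler_nat| |].
    by rewrite posrE ltr0n !muln_gt0 Cp !expn_gt0 j0 mj0.
  by rewrite posrE ltr0n !expn_gt0 m0.
have q2 : ln (((m ^ m)%:R) : R) <= ln (((m.+1 * ('C(m, j) * (j ^ j * (m - j) ^ (m - j))))%:R) : R).
  rewrite ler_ln; [by rewrite ler_nat| |].
    by rewrite posrE ltr0n !expn_gt0 m0.
  by rewrite posrE ltr0n !muln_gt0 Cp !expn_gt0 j0 mj0.
rewrite eL eM in q1; rewrite eM1 eL eM in q2.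
rewrite /Hf; split; lra.
Qed.

Lemma J_fin k n : J k n =
  (let m := #|[set c : n.-tuple bool | resistant c && (count id c == k)]| in
   if m == 0 then 1 else m)%N.
Proof.
rewrite /J /=.
have -> : #|[set c : n.-tuple bool | resistant c && (count id c == k)]%classic| =
          #|[set c : n.-tuple bool | resistant c && (count id c == k)]|.
  by apply: eq_card => c; rewrite [in RHS]inE; exact: asboolb.
by [].
Qed.

Lemma J_eq k n : (n.+1 <= 2 * k)%N -> (3 * k <= 2 * n + 2)%N ->
  J k n = 'C(n - k + 1, 2 * k - n.+1).
Proof.
move=> h1 h2; rewrite J_fin /= card_res //.
have : (0 < 'C(n - k + 1, 2 * k - n.+1))%N by rewrite bin_gt0; lia.
by case: ('C(_, _)).
Qed.

Section Pt.
Variable R : realType.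

Definition phi (y : R) := y * ln y.
Definition Gf (x N : R) := phi (1 - x + N^-1) - phi (2 * x - 1 - N^-1) - phi (2 - 3 * x + 2 * N^-1).
Definition Lf (N : R) := ln 2 * N^-1 + ln N / N.

Lemma phi_id (A B D N : R) : 0 < A -> 0 < B -> 0 < D -> 0 < N -> D = A - B ->
  phi (A / N) - phi (B / N) - phi (D / N) = (A * ln A - B * ln B - D * ln D) / N.
Proof.
move=> Ap Bp Dp Np DE; rewrite /phi !ln_div ?posrE //.
have NE : N != 0 by rewrite gt_eqF.
set lA := ln A; set lB := ln B; set lD := ln D; set lN := ln N.
have -> : A / N * (lA - lN) - B / N * (lB - lN) - D / N * (lD - lN) =
  (A * lA - B * lB - D * lD) / N - (A - B - D) * lN / N by field.
by rewrite DE subrr mul0r mul0r subr0.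
Qed.

Lemma natfacts n k : (n.+1 < 2 * k)%N -> (3 * k < 2 * n)%N -> (2 < n)%N ->
  [/\ (k <= n)%N, (n.+1 <= 2 * k)%N, (3 * k <= 2 * n + 2)%N,
      (0 < 2 * k - n.+1 < n - k + 1)%N &
      [/\ (2 * k - n.+1 <= n - k + 1)%N, (0 < n - k + 1)%N,
          (0 < (n - k + 1) - (2 * k - n.+1))%N & ((n - k + 1).+1 <= 2 * n)%N]].
Proof. move=> *; split; try split; lia. Qed.

Lemma point_bound (a0 b0 : R) (n k : nat) :
  1 / 2 < a0 -> b0 < 2 / 3 -> a0 < k%:R / n%:R -> k%:R / n%:R < b0 -> (2 < n%:R :> R) ->
  1 < (2 * a0 - 1) * n%:R ->
  Gf (k%:R / n%:R) n%:R - Lf n%:R <= ln ((J k n)%:R) / n%:R <= Gf (k%:R / n%:R) n%:R.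
Proof.
move=> ha hb xa xb N2 N3.
set N : R := n%:R in xa xb N2 N3 *; set K : R := k%:R in xa xb *.
have Np : 0 < N by lra.
have NE : N != 0 by rewrite gt_eqF.
have KE : K = (K / N) * N by field.
set x := K / N in xa xb KE *.
have r1 : (n.+1%:R : R) < (2 * k)%:R.
  rewrite natrM -/K -addn1 natrD -/N KE.
  have h0 : 0 < x * N - a0 * N by rewrite -mulrBl mulr_gt0 // subr_gt0.
  lra.
have r2 : ((3 * k)%:R : R) < (2 * n)%:R.
  rewrite !natrM -/K -/N KE.
  have h0 : 0 < b0 * N - x * N by rewrite -mulrBl mulr_gt0 // subr_gt0.
  have h1 : 0 < 2 * N - 3 * (b0 * N) by rewrite mulrA -mulrBl mulr_gt0 //; lra.
  lra.
rewrite ltr_nat in r1; rewrite ltr_nat in r2.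
have n2 : (2 < n)%N by rewrite -(ltr_nat R).
have [kn h1 h2 jm [jlm m0 d0 m2]] := natfacts r1 r2 n2.
rewrite J_eq //.
set m := (n - k + 1)%N in jm jlm m0 d0 m2 *; set j := (2 * k - n.+1)%N in jm jlm d0 *.
have [up lo] := lnC_both R jm.
have em : (m%:R : R) = N - K + 1.
  by rewrite /m natrD natrB // -/N -/K.
have ej : (j%:R : R) = 2 * K - N - 1.
  by rewrite /j natrB // natrM -addn1 natrD; ring.
have ed : ((m - j)%:R : R) = 2 * N - 3 * K + 2.
  by rewrite natrB // em ej; ring.
have mp : (0 : R) < m%:R by rewrite ltr0n.
have jp : (0 : R) < j%:R by rewrite ltr0n; case/andP: jm.
have dp : (0 : R) < (m - j)%:R by rewrite ltr0n.
have GE : Gf x N = Hf R m j / N.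
  have dE : ((m - j)%:R : R) = m%:R - j%:R by rewrite ed em ej; ring.
  rewrite /Hf -(phi_id mp jp dp Np dE).
  rewrite /Gf em ej ed.
  have e1 : 1 - x + N^-1 = (N - K + 1) / N by rewrite /x; field.
  have e2 : 2 * x - 1 - N^-1 = (2 * K - N - 1) / N by rewrite /x; field.
  have e3 : 2 - 3 * x + 2 * N^-1 = (2 * N - 3 * K + 2) / N by rewrite /x; field.
  by rewrite e1 e2 e3.
have lm : ln (m.+1%:R : R) <= ln 2 + ln N.
  rewrite -lnM; [|by rewrite posrE|by rewrite posrE].
  rewrite ler_ln; [|by rewrite posrE ltr0n|by rewrite posrE mulr_gt0].
  have -> : (2 : R) * N = (2 * n)%:R by rewrite natrM.
  by rewrite ler_nat.
rewrite GE /Lf; apply/andP; split.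
  rewrite -mulrDl -mulrBl ler_pM2r; [lra| by rewrite invr_gt0].
by rewrite ler_pM2r; [exact: up| rewrite invr_gt0].
Qed.

End Pt.

Local Open Scope classical_set_scope.

Lemma lnx_x (R : realType) (N : nat -> R) : N @ \oo --> +oo ->
  (fun i => ln (N i) / N i) @ \oo --> 0.
Proof.
move=> HN.
have N1 : \forall i \near \oo, 1 <= N i by move/cvgryPge : HN; apply.
have HV : (fun i => (N i)^-1) @ \oo --> 0.
  apply/gtr0_cvgV0 => //; near=> i; apply: lt_le_trans (ltr01) _; near: i; exact: N1.
apply: (@squeeze_cvgr _ _ _ _ (cst 0) (fun i => 2 * Num.sqrt ((N i)^-1))).
- near=> i.
  have h1 : 1 <= N i by near: i; exact: N1.
  have Np : 0 < N i by apply: lt_le_trans h1.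
  set s := Num.sqrt (N i).
  have sp : 0 < s by rewrite sqrtr_gt0.
  have Ns : N i = s * s by rewrite -expr2 sqr_sqrtr // ltW.
  have lnN : ln (N i) = 2 * ln s by rewrite Ns lnM ?posrE //; ring.
  have ls := ln_sublinear sp.
  rewrite sqrtrV ?(ltW Np) // -/s /=.
  apply/andP; split.
    by rewrite divr_ge0 ?ln_ge0 // ltW.
  rewrite ler_pdivrMr // lnN Ns.
  have -> : 2 * s^-1 * (s * s) = 2 * s by field; rewrite gt_eqF.
  lra.
- exact: cvg_cst.
- suff : (fun i => 2 * Num.sqrt ((N i)^-1)) @ \oo --> 2 * Num.sqrt 0.
    by rewrite sqrtr0 mulr0.
  apply: cvgM; first exact: cvg_cst.
  exact: (continuous_cvg _ (@sqrt_continuous R 0) HV).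
Unshelve. all: by end_near.
Qed.

Definition Fr (R : realType) (rho : R) : R :=
  (1 - rho) * ln (1 - rho) - (2 * rho - 1) * ln (2 * rho - 1)
            - (2 - 3 * rho) * ln (2 - 3 * rho).

Lemma invcvg (R : realType) (N : nat -> R) : N @ \oo --> +oo ->
  (fun i => (N i)^-1) @ \oo --> 0.
Proof.
move=> HN; apply/gtr0_cvgV0 => //.
by move/cvgryPgt : HN => /(_ 0).
Qed.

Lemma main_cvg (R : realType) (rho : R) kn : 1 / 2 < rho -> rho < 2 / 3 ->
  admissible rho kn ->
  (fun i => ln ((J (kn i).1 (kn i).2)%:R : R) / ((kn i).2)%:R) @ \oo --> Fr rho.
Proof.
move=> r1 r2 [HN Hx].
pose N i : R := ((kn i).2)%:R.
pose x i : R := ((kn i).1)%:R / N i.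
have HN' : N @ \oo --> +oo := HN.
have Hx' : x @ \oo --> rho := Hx.
pose a0 := (1 / 2 + rho) / 2; pose b0 := (rho + 2 / 3) / 2.
have ha : 1 / 2 < a0 by rewrite /a0; lra.
have hb : b0 < 2 / 3 by rewrite /b0; lra.
have HV := invcvg HN'.
have Ha : (fun i => 1 - x i + (N i)^-1) @ \oo --> 1 - rho.
  rewrite -[X in _ --> X]addr0; apply: cvgD => //.
  by apply: cvgB => //; exact: cvg_cst.
have Hb : (fun i => 2 * x i - 1 - (N i)^-1) @ \oo --> 2 * rho - 1.
  rewrite -[X in _ --> X]subr0; apply: cvgB => //.
  apply: cvgB; last exact: cvg_cst.
  by apply: cvgM => //; exact: cvg_cst.
have Hc : (fun i => 2 - 3 * x i + 2 * (N i)^-1) @ \oo --> 2 - 3 * rho.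
  have -> : 2 - 3 * rho = 2 - 3 * rho + 2 * 0 by rewrite mulr0 addr0.
  apply: cvgD; last by apply: cvgM => //; exact: cvg_cst.
  apply: cvgB; first exact: cvg_cst.
  by apply: cvgM => //; exact: cvg_cst.
have cphi y : 0 < y -> {for y, continuous (@phi R)}.
  move=> y0; apply: continuousM; first exact: cvg_id.
  exact: continuous_ln.
have HG : (fun i => Gf (x i) (N i)) @ \oo --> Fr rho.
  rewrite /Gf /Fr; apply: cvgB; first apply: cvgB.
  - by apply: (continuous_cvg _ (cphi _ _) Ha); lra.
  - by apply: (continuous_cvg _ (cphi _ _) Hb); lra.
  - by apply: (continuous_cvg _ (cphi _ _) Hc); lra.
have HL : (fun i => Lf (N i)) @ \oo --> 0.
  suff : (fun i => Lf (N i)) @ \oo --> ln 2 * 0 + 0 by rewrite mulr0 addr0.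
  rewrite /Lf; apply: cvgD; last exact: lnx_x.
  by apply: cvgM => //; exact: cvg_cst.
have E1 := cvgr_gt _ Hx' a0 (ltac:(rewrite /a0; lra)).
have E2 := cvgr_lt _ Hx' b0 (ltac:(rewrite /b0; lra)).
have E3 := (cvgryPgt _).1 HN' 2.
have E4 := (cvgryPgt _).1 HN' ((2 * a0 - 1)^-1).
apply: (@squeeze_cvgr _ _ _ _ (fun i => Gf (x i) (N i) - Lf (N i))
          (fun i => Gf (x i) (N i))).
- near=> i.
  have e1 : a0 < x i by near: i; exact: E1.
  have e2 : x i < b0 by near: i; exact: E2.
  have e3 : 2 < N i by near: i; exact: E3.
  have e4 : (2 * a0 - 1)^-1 < N i by near: i; exact: E4.
  apply: (point_bound ha hb e1 e2 e3).
  have p : 0 < 2 * a0 - 1 by lra.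
  by rewrite -(ltr_pM2l p) mulfV ?gt_eqF in e4.
- rewrite -[X in _ --> X]subr0; exact: cvgB.
- exact: HG.
Unshelve. all: by end_near.
Qed.

Theorem mainTheorem1 (R : realType) (rho : R) :
  1 / 2 < rho -> rho < 2 / 3 ->
  SP rho = ((1 - rho) * ln (1 - rho) - (2 * rho - 1) * ln (2 * rho - 1)
            - (2 - 3 * rho) * ln (2 - 3 * rho))%:E.
Proof.
move=> r1 r2.
have lim kn : admissible rho kn ->
    limn_esup (fun i => (ln ((J (kn i).1 (kn i).2)%:R : R) / ((kn i).2)%:R)%:E)
    = (Fr rho)%:E.
  move=> adm; have hc := main_cvg r1 r2 adm.
  have hc' : (fun i => (ln ((J (kn i).1 (kn i).2)%:R : R) / ((kn i).2)%:R)%:E)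
      @ \oo --> (Fr rho)%:E.
    by apply: cvg_EFin; [exact: nearW | exact: hc].
  exact: (cvg_limn_einf_sup hc').2.
pose kn0 i := (Num.truncn (rho * i%:R), i).
have rho0 : 0 < rho by lra.
have adm0 : admissible rho kn0.
  split; first exact: cvgr_idn.
  apply: (@squeeze_cvgr _ _ _ _ (fun i : nat => rho - (i%:R)^-1) (cst rho)).
  - near=> i.
    have ip : (0 : R) < i%:R by rewrite ltr0n; near: i; exists 1%N.
    have := truncn_itv (mulr_ge0 (ltW rho0) (ltW ip)).
    rewrite /kn0 /=; set t := Num.truncn _ => /andP[h1 h2].
    rewrite -natr1 in h2.
    apply/andP; split.
      rewrite ler_pdivlMr // mulrBl mulVf ?gt_eqF //; lra.
    by rewrite ler_pdivrMr.
  - rewrite -[X in _ --> X]subr0; apply: cvgB; first exact: cvg_cst.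
    exact: invcvg cvgr_idn.
  - exact: cvg_cst.
rewrite /SP; set S := (X in ereal_sup X).
have -> : S = [set (Fr rho)%:E].
  apply/seteqP; split => y /=.
    by case=> kn adm <-; rewrite lim.
  by move=> ->; exists kn0 => //; rewrite lim.
by rewrite ereal_sup1.
Unshelve. all: by end_near.
Qed.
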